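(* Let $z\in\mathbb C^d_\Delta$. The orbit $Az$ is closed in $\mathbb C^d_\Delta$ if and only if there exists a face $F$ of $\Delta$ such that $z\in(\mathbb C^* )^{F^c}$. Moreover, if $Az$ is not closed, then its closure in $\mathbb C^d_\Delta$ contains one and only one closed $A$-orbit.
   Context: Let $\mathfrak d$ be an $n$-dimensional real vector space, $\mathfrak d^*$ its dual. A quasilattice in $\mathfrak d$ is the $\mathbb Z$-submodule generated by a finite set of vectors spanning $\mathfrak d$. Let $\Delta\subset\mathfrak d^*$ be an $n$-dimensional convex polytope (not necessarily rational or simple) with $d$ facets, written as $\Delta=\bigcap_{j=1}^d\{\mu\in\mathfrak d^*:\langle\mu,X_j\rangle\ge\lambda_j\}$, where $X_1,\dots,X_d\in\mathfrak d$ are chosen inward-pointing normals to the facets and $\lambda_j\in\mathbb R$; let $Q$ be a quasilattice containing $X_1,\dots,X_d$. For each (relatively open) face $F$ of $\Delta$ let $I_F\subseteq\{1,\dots,d\}$ be such that $F=\{\mu\in\Delta:\langle\mu,X_j\rangle=\lambda_j\iff j\in I_F\}$ (the interior of $\Delta$ is the face with $I_F=\emptyset$). For $J\subseteq\{1,\dots,d\}$ and $\mathbb K\in\{\mathbb C,\mathbb C^*\}$ put $\mathbb K^J=\{z\in\mathbb C^d: z_j\in\mathbb K\ (j\in J),\ z_j=0\ (j\notin J)\}$; write $\mathbb K^F=\mathbb K^{I_F}$, $\mathbb K^{F^c}=\mathbb K^{\{1,\dots,d\}\setminus I_F}$, and $\mathbb C^F\times(\mathbb C^* )^{F^c}=\{z\in\mathbb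 C^d: z_j\ne0\text{ for all }j\notin I_F\}$. Let $\mathbb C^d_\Delta=\bigcup_F\mathbb C^F\times(\mathbb C^* )^{F^c}$, the union over all faces of $\Delta$ (an open subset of $\mathbb C^d$). Let $\pi:\mathbb R^d\to\mathfrak d$ be the linear map with $e_j\mapsto X_j$ and $\mathfrak n=\ker\pi$. Let $A=\{\exp(iY):Y\in\mathfrak n\}$, acting on $\mathbb C^d$ by $\exp(iY)\cdot z=(e^{-2\pi Y_1}z_1,\dots,e^{-2\pi Y_d}z_d)$. *)

(* Defs.v *)
From Stdlib Require Import Reals List.
Import ListNotations.
Open Scope R_scope.

Definition fsum (n : nat) (f : nat -> R) : R :=
  fold_right Rplus 0 (map f (seq 0 n)).

(* Vectors of R^n (resp. d^* = R^n, d = R^n) are functions nat -> R,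
   only coordinates k < n are meaningful. *)
Definition pairing (n : nat) (mu X : nat -> R) : R := fsum n (fun k => mu k * X k).

Definition inDelta (n d : nat) (X : nat -> nat -> R) (lam : nat -> R) (mu : nat -> R) : Prop :=
  forall j, (j < d)%nat -> pairing n mu (X j) >= lam j.

Definition activeSet (n d : nat) (X : nat -> nat -> R) (lam : nat -> R)
  (I : nat -> Prop) (mu : nat -> R) : Prop :=
  inDelta n d X lam mu /\
  forall j, (j < d)%nat -> (pairing n mu (X j) = lam j <-> I j).

(* I = I_F for a (relatively open, nonempty) face F of Delta:
   F = { mu in Delta | <mu,X_j> = lam_j <-> j in I } is nonempty. *)
Definition isFaceIndex (n d : nat) (X : nat -> nat -> R) (lam : nat -> R) (I : nat -> Prop) : Prop :=
  exists mu, activeSet n d X lam I mu.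

Definition isPolytopeData (n d : nat) (X : nat -> nat -> R) (lam : nat -> R) : Prop :=
  (exists M, forall mu, inDelta n d X lam mu -> forall k, (k < n)%nat -> Rabs (mu k) <= M) /\
  (* n-dimensional: has an interior point *)
  isFaceIndex n d X lam (fun _ => False) /\
  (* each j < d gives a facet (distinct, irredundant) *)
  (forall j, (j < d)%nat -> isFaceIndex n d X lam (fun i => i = j)).

(* Complex numbers as pairs of reals; points of C^d are functions
   nat -> C, only coordinates j < d are meaningful. *)
Definition C : Type := (R * R)%type.
Definition Cpoint : Type := nat -> C.
Definition Cnz (c : C) : Prop := c <> (0, 0).
Definition Cscale (t : R) (c : C) : C := (t * fst c, t * snd c).

Definition inCF_CstarFc (d : nat) (I : nat -> Prop) (z : Cpoint) : Prop :=
  forall j, (j < d)%nat -> ~ I j -> Cnz (z j).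

Definition inCdDelta (n d : nat) (X : nat -> nat -> R) (lam : nat -> R) (z : Cpoint) : Prop :=
  exists I, isFaceIndex n d X lam I /\ inCF_CstarFc d I z.

Definition inCstarFc (d : nat) (I : nat -> Prop) (z : Cpoint) : Prop :=
  forall j, (j < d)%nat -> ((I j -> z j = (0, 0)) /\ (~ I j -> Cnz (z j))).

(* n = ker pi, pi(e_j) = X_j *)
Definition inKerPi (n d : nat) (X : nat -> nat -> R) (Y : nat -> R) : Prop :=
  forall k, (k < n)%nat -> fsum d (fun j => Y j * X j k) = 0.

(* exp(iY) . z = (e^{-2 pi Y_1} z_1, ..., e^{-2 pi Y_d} z_d) *)
Definition orbitA (n d : nat) (X : nat -> nat -> R) (z : Cpoint) (w : Cpoint) : Prop :=
  exists Y, inKerPi n d X Y /\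
    forall j, (j < d)%nat -> w j = Cscale (exp (- (2 * PI * Y j))) (z j).

(* Euclidean topology on C^d (via the equivalent sup-norm on coordinates j < d) *)
Definition close (d : nat) (eps : R) (w v : Cpoint) : Prop :=
  forall j, (j < d)%nat ->
    Rabs (fst (w j) - fst (v j)) < eps /\ Rabs (snd (w j) - snd (v j)) < eps.

Definition adherent (d : nat) (S : Cpoint -> Prop) (w : Cpoint) : Prop :=
  forall eps, eps > 0 -> exists s, S s /\ close d eps s w.

Definition closureIn (d : nat) (U S : Cpoint -> Prop) (w : Cpoint) : Prop :=
  U w /\ adherent d S w.

Definition closedIn (d : nat) (U S : Cpoint -> Prop) : Prop :=
  forall w, U w -> adherent d S w -> S w.

(* Main.v *)
Require Import Defs.
From Stdlib Require Import Reals List.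
From Stdlib Require Import Lra Lia ClassicalEpsilon Classical.
Open Scope R_scope.


Lemma fold_plus_acc (l : list R) (a : R) : fold_right Rplus a l = fold_right Rplus 0 l + a.
Proof. induction l; simpl; [ring| rewrite IHl; ring]. Qed.

Lemma fsum_0 f : fsum 0 f = 0.
Proof. reflexivity. Qed.

Lemma fsum_S n f : fsum (S n) f = fsum n f + f n.
Proof.
  unfold fsum. rewrite seq_S, map_app, fold_right_app. simpl.
  rewrite fold_plus_acc. ring.
Qed.

Lemma fsum_ext n f g : (forall i, (i < n)%nat -> f i = g i) -> fsum n f = fsum n g.
Proof.
  induction n; intros H; [reflexivity|].
  rewrite !fsum_S, IHn by (intros; apply H; lia). rewrite H by lia. reflexivity.
Qed.

Lemma fsum_lin n f g h x y :
  (forall i, (i < n)%nat -> h i = x * f i + y * g i) -> fsum n h = x * fsum n f + y * fsum n g.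
Proof.
  induction n; intros H; [rewrite !fsum_0; ring|].
  rewrite !fsum_S, IHn by (intros; apply H; lia). rewrite H by lia. ring.
Qed.

Lemma fsum_plus n f g : fsum n (fun i => f i + g i) = fsum n f + fsum n g.
Proof. rewrite (fsum_lin n f g _ 1 1) by (intros; ring). ring. Qed.

Lemma fsum_scal n f c : fsum n (fun i => c * f i) = c * fsum n f.
Proof. rewrite (fsum_lin n f f _ c 0) by (intros; ring). ring. Qed.

Lemma fsum_zero n f : (forall i, (i < n)%nat -> f i = 0) -> fsum n f = 0.
Proof. intros H. rewrite (fsum_lin n f f f 0 0) by (intros; rewrite H; auto; ring). ring. Qed.

Lemma fsum_le n f g : (forall i, (i < n)%nat -> f i <= g i) -> fsum n f <= fsum n g.
Proof.
  induction n; intros H; [rewrite !fsum_0; lra|].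
  rewrite !fsum_S. specialize (IHn ltac:(intros; apply H; lia)). specialize (H n ltac:(lia)). lra.
Qed.

Lemma fsum_nonneg n f : (forall i, (i < n)%nat -> 0 <= f i) -> 0 <= fsum n f.
Proof. intros H. rewrite <- (fsum_zero n (fun _ => 0)) by auto. apply fsum_le. auto. Qed.

Lemma fsum_ge_term n f j : (forall i, (i < n)%nat -> 0 <= f i) -> (j < n)%nat -> f j <= fsum n f.
Proof.
  induction n; intros H Hj; [lia|].
  rewrite fsum_S. destruct (Nat.eq_dec j n).
  - subst. pose proof (fsum_nonneg n f ltac:(intros; apply H; lia)). lra.
  - pose proof (IHn ltac:(intros; apply H; lia) ltac:(lia)). specialize (H n ltac:(lia)). lra.
Qed.

Lemma fsum_swap n m (f : nat -> nat -> R) :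
  fsum n (fun i => fsum m (fun j => f i j)) = fsum m (fun j => fsum n (fun i => f i j)).
Proof.
  induction n.
  - rewrite fsum_0. symmetry. apply fsum_zero. intros. apply fsum_0.
  - rewrite fsum_S, IHn. rewrite <- fsum_plus. apply fsum_ext. intros. rewrite fsum_S. reflexivity.
Qed.

Lemma fsum_add a b f : fsum (a + b) f = fsum a f + fsum b (fun i => f (a + i)%nat).
Proof.
  induction b.
  - rewrite Nat.add_0_r, fsum_0. ring.
  - rewrite Nat.add_succ_r, !fsum_S, IHb. ring.
Qed.

Lemma fsum_abs n f : Rabs (fsum n f) <= fsum n (fun i => Rabs (f i)).
Proof.
  induction n; [rewrite !fsum_0, Rabs_R0; lra|].
  rewrite !fsum_S. pose proof (Rabs_triang (fsum n f) (f n)). lra.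
Qed.

Lemma fsum_single n j0 (g : nat -> R) : (j0 < n)%nat ->
  fsum n (fun j => (if Nat.eq_dec j j0 then 1 else 0) * g j) = g j0.
Proof.
  induction n; intros H; [lia|]. rewrite fsum_S.
  destruct (Nat.eq_dec n j0).
  - subst. rewrite (fsum_zero j0). ring. intros i Hi. destruct (Nat.eq_dec i j0); [lia|ring].
  - rewrite IHn by lia. ring.
Qed.

Lemma fsum_sq_zero n f : fsum n (fun k => f k * f k) <= 0 -> forall k, (k < n)%nat -> f k = 0.
Proof.
  intros H k Hk. pose proof (fsum_ge_term n (fun k => f k * f k) k ltac:(intros; nra) Hk). simpl in H0. nra.
Qed.

Lemma pairing_lin2 n u v w x y :
  pairing n u (fun k => x * v k + y * w k) = x * pairing n u v + y * pairing n u w.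
Proof. unfold pairing. apply fsum_lin. intros. ring. Qed.

Lemma pairing_lin1 n u v w x y :
  pairing n (fun k => x * u k + y * v k) w = x * pairing n u w + y * pairing n v w.
Proof. unfold pairing. apply fsum_lin. intros. ring. Qed.

Lemma pairing_ext n u v u' v' : (forall k, (k < n)%nat -> u k = u' k) -> (forall k, (k < n)%nat -> v k = v' k) ->
  pairing n u v = pairing n u' v'.
Proof. intros. unfold pairing. apply fsum_ext. intros. rewrite H, H0 by auto. reflexivity. Qed.

Lemma farkas n : forall m (a : nat -> nat -> R) (b : nat -> R),
  (forall u, (forall i, (i < m)%nat -> pairing n u (a i) >= 0) -> pairing n u b >= 0) ->
  exists c, (forall i, (i < m)%nat -> c i >= 0) /\
            forall k, (k < n)%nat -> b k = fsum m (fun i => c i * a i k).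
Proof.
  induction m; intros a b H.
  - exists (fun _ => 0). split; [intros; lia|]. intros k Hk. rewrite fsum_0.
    specialize (H (fun k => - b k) ltac:(intros; lia)).
    assert (Hs : fsum n (fun k => b k * b k) <= 0).
    { unfold pairing in H. rewrite (fsum_lin n (fun k => b k * b k) (fun k => b k * b k) _ (-1) 0) in H
        by (intros; ring). lra. }
    apply (fsum_sq_zero n b Hs k Hk).
  - destruct (classic (forall u, (forall i, (i < m)%nat -> pairing n u (a i) >= 0) -> pairing n u b >= 0)) as [Hc|Hc].
    + destruct (IHm a b Hc) as [c [Hc1 Hc2]].
      exists (fun i => if Nat.eq_dec i m then 0 else c i). split.
      * intros i Hi. destruct (Nat.eq_dec i m); [lra|apply Hc1; lia].
      * intros k Hk. rewrite fsum_S, Hc2 by auto. destruct (Nat.eq_dec m m); [|congruence].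
        rewrite Rmult_0_l, Rplus_0_r. apply fsum_ext. intros i Hi. destruct (Nat.eq_dec i m); [lia|reflexivity].
    + apply not_all_ex_not in Hc. destruct Hc as [u0 Hu0].
      apply imply_to_and in Hu0. destruct Hu0 as [Hu0a Hu0b]. apply Rnot_ge_lt in Hu0b.
      set (p := pairing n u0 (a m)).
      assert (Hp : p < 0).
      { destruct (Rlt_or_le p 0) as [?|Hle]; auto.
        exfalso. assert (pairing n u0 b >= 0); [|lra]. apply H. intros i Hi.
        destruct (Nat.eq_dec i m); [subst; unfold p in Hle; lra| apply Hu0a; lia]. }
      set (a' := fun i k => 1 * a i k + (- (pairing n u0 (a i) / p)) * a m k).
      set (b' := fun k => 1 * b k + (- (pairing n u0 b / p)) * a m k).
      assert (H' : forall u, (forall i, (i < m)%nat -> pairing n u (a' i) >= 0) -> pairing n u b' >= 0).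
      { intros u Hu.
        set (u' := fun k => 1 * u k + (- (pairing n u (a m) / p)) * u0 k).
        assert (E : forall v, pairing n u' v = pairing n u v + (- (pairing n u (a m) / p)) * pairing n u0 v).
        { intros v. unfold u'. rewrite pairing_lin1. ring. }
        assert (Hb : pairing n u' b >= 0).
        { apply H. intros i Hi. rewrite E. destruct (Nat.eq_dec i m).
          - subst. fold p. field_simplify; [lra|lra].
          - specialize (Hu i ltac:(lia)). unfold a' in Hu.
            rewrite (pairing_lin2 n u (a i) (a m) 1 _) in Hu.
            replace (pairing n u (a i) + - (pairing n u (a m) / p) * pairing n u0 (a i)) with
                (1 * pairing n u (a i) + - (pairing n u0 (a i) / p) * pairing n u (a m)) by (field; lra).
            exact Hu. }
        rewrite E in Hb. unfold b'. rewrite (pairing_lin2 n u b (a m) 1 _) in *.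
        replace (1 * pairing n u b + - (pairing n u0 b / p) * pairing n u (a m)) with
          (pairing n u b + - (pairing n u (a m) / p) * pairing n u0 b) by (field; lra). exact Hb. }
      destruct (IHm a' b' H') as [c [Hc1 Hc2]].
      set (S0 := fsum m (fun i => c i * pairing n u0 (a i))).
      assert (HS0 : 0 <= S0).
      { apply fsum_nonneg. intros i Hi. specialize (Hc1 i Hi). specialize (Hu0a i Hi). nra. }
      set (t := (pairing n u0 b - S0) / p).
      assert (Ht : t >= 0).
      { assert (Htp : t * p = pairing n u0 b - S0) by (unfold t; field; lra). nra. }
      exists (fun i => if Nat.eq_dec i m then t else c i). split.
      * intros i Hi. destruct (Nat.eq_dec i m); [lra|apply Hc1; lia].
      * intros k Hk. rewrite fsum_S. destruct (Nat.eq_dec m m); [|congruence].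
        rewrite (fsum_ext m _ (fun i => c i * a i k)) by (intros i Hi; destruct (Nat.eq_dec i m); [lia|reflexivity]).
        assert (Hb' := Hc2 k Hk). unfold b', a' in Hb'.
        rewrite (fsum_lin m (fun i => c i * a i k) (fun i => c i * pairing n u0 (a i)) _ 1 (- a m k / p)) in Hb'
          by (intros; field; lra).
        fold S0 in Hb'. unfold t. apply (Rplus_eq_reg_l (- (pairing n u0 b / p) * a m k)).

        transitivity (1 * b k + - (pairing n u0 b / p) * a m k); [ring|]. rewrite Hb'. field. lra.
Qed.


Definition Nc (c : R * R) : R := Rabs (fst c) + Rabs (snd c).

Lemma Nc_nonneg c : 0 <= Nc c.
Proof. unfold Nc. pose proof (Rabs_pos (fst c)). pose proof (Rabs_pos (snd c)). lra. Qed.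

Lemma Nc_scale t c : 0 <= t -> Nc (Cscale t c) = t * Nc c.
Proof. intros. unfold Nc, Cscale; simpl. rewrite !Rabs_mult, Rabs_pos_eq by auto. ring. Qed.

Lemma Nc_zero c : Nc c = 0 -> c = (0,0).
Proof.
  destruct c as [x y]. unfold Nc; simpl. intros H.
  pose proof (Rabs_pos x). pose proof (Rabs_pos y).
  assert (Rabs x = 0) by lra. assert (Rabs y = 0) by lra.
  destruct (Req_dec_T x 0) as [->|e1]; [|apply Rabs_no_R0 in e1; contradiction].
  destruct (Req_dec_T y 0) as [->|e2]; [|apply Rabs_no_R0 in e2; contradiction]. reflexivity.
Qed.

Lemma Nc_pos c : Cnz c -> Nc c > 0.
Proof.
  intros H. pose proof (Nc_nonneg c). destruct (Req_dec_T (Nc c) 0) as [e|e].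
  - apply Nc_zero in e. contradiction.
  - lra.
Qed.

Lemma Nc_00 : Nc (0,0) = 0.
Proof. unfold Nc; simpl. rewrite Rabs_R0. ring. Qed.

Lemma Cnz_of_Nc c : Nc c > 0 -> Cnz c.
Proof. intros H E. rewrite E, Nc_00 in H. lra. Qed.

Lemma Cscale_0 t : Cscale t (0,0) = (0,0).
Proof. unfold Cscale; simpl. f_equal; ring. Qed.

Lemma Cscale_1 c : Cscale 1 c = c.
Proof. destruct c. unfold Cscale; simpl. f_equal; ring. Qed.

Lemma fst_le_Nc c : Rabs (fst c) <= Nc c.
Proof. unfold Nc. pose proof (Rabs_pos (snd c)). lra. Qed.
Lemma snd_le_Nc c : Rabs (snd c) <= Nc c.
Proof. unfold Nc. pose proof (Rabs_pos (fst c)). lra. Qed.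

Lemma close_Nc d eps s w j : close d eps s w -> (j < d)%nat ->
  Nc (s j) < Nc (w j) + 2 * eps /\ Nc (w j) - 2 * eps < Nc (s j).
Proof.
  intros H Hj. destruct (H j Hj) as [H1 H2]. unfold Nc.
  pose proof (Rabs_triang_inv (fst (s j)) (fst (w j))).
  pose proof (Rabs_triang_inv (fst (w j)) (fst (s j))).
  pose proof (Rabs_triang_inv (snd (s j)) (snd (w j))).
  pose proof (Rabs_triang_inv (snd (w j)) (snd (s j))).
  rewrite Rabs_minus_sym in H3, H5. lra.
Qed.

Lemma zero_small x : (forall eps, eps > 0 -> Rabs x < eps) -> x = 0.
Proof.
  intros H. destruct (Req_dec_T x 0) as [e|e]; auto.
  exfalso. pose proof (Rabs_pos_lt x e). specialize (H (Rabs x) H0). lra.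
Qed.

Lemma ker_identity n d X Y mu : inKerPi n d X Y ->
  fsum d (fun j => Y j * pairing n mu (X j)) = 0.
Proof.
  intros H. unfold pairing.
  rewrite (fsum_ext d _ (fun j => fsum n (fun k => mu k * (Y j * X j k))))
    by (intros; rewrite <- fsum_scal; apply fsum_ext; intros; ring).
  rewrite fsum_swap. apply fsum_zero. intros k Hk. rewrite fsum_scal, H by auto. ring.
Qed.

Lemma ker_lin n d X Y1 Y2 x y : inKerPi n d X Y1 -> inKerPi n d X Y2 ->
  inKerPi n d X (fun j => x * Y1 j + y * Y2 j).
Proof.
  intros H1 H2 k Hk. rewrite (fsum_lin d (fun j => Y1 j * X j k) (fun j => Y2 j * X j k) _ x y)
    by (intros; ring). rewrite H1, H2 by auto. ring.
Qed.

Lemma ker_zero n d X : inKerPi n d X (fun _ => 0).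
Proof. intros k Hk. apply fsum_zero. intros. ring. Qed.

Lemma expE0 : exp (- (2 * PI * 0)) = 1.
Proof. rewrite Rmult_0_r, Ropp_0. apply exp_0. Qed.

Lemma orbit_refl n d X w : orbitA n d X w w.
Proof. exists (fun _ => 0). split; [apply ker_zero|]. intros. rewrite expE0, Cscale_1. reflexivity. Qed.

Lemma adh_zero n d X z w j : adherent d (orbitA n d X z) w -> (j < d)%nat -> z j = (0,0) -> w j = (0,0).
Proof.
  intros H Hj Hz. destruct (w j) as [a b] eqn:Ew.
  assert (forall eps, eps > 0 -> Rabs a < eps /\ Rabs b < eps).
  { intros eps He. destruct (H eps He) as [s [[Y [_ HY]] Hc]]. destruct (Hc j Hj) as [h1 h2].
    rewrite HY, Hz, Cscale_0, Ew in h1, h2 by auto. simpl in h1, h2.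
    rewrite Rminus_0_l, Rabs_Ropp in h1, h2. auto. }
  f_equal; apply zero_small; intros; apply H0; auto.
Qed.

Lemma PI2_pos : 2 * PI > 0.
Proof. pose proof PI_RGT_0. lra. Qed.

Lemma expY_lt Y a : 0 < a -> exp (- (2 * PI * Y)) < a -> Y > - ln a / (2 * PI).
Proof.
  intros Ha H. rewrite <- (exp_ln a Ha) in H. apply exp_lt_inv in H.
  pose proof PI2_pos. apply (Rmult_lt_reg_r (2 * PI)); auto. unfold Rdiv. rewrite Rmult_assoc, Rinv_l by lra. lra.
Qed.

Lemma expY_gt Y a : 0 < a -> a < exp (- (2 * PI * Y)) -> Y < - ln a / (2 * PI).
Proof.
  intros Ha H. rewrite <- (exp_ln a Ha) in H. apply exp_lt_inv in H.
  pose proof PI2_pos. apply (Rmult_lt_reg_r (2 * PI)); auto. unfold Rdiv. rewrite Rmult_assoc, Rinv_l by lra. lra.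
Qed.

Lemma expY_lt2 Y T : exp (- (2 * PI * Y)) < exp (- (2 * PI * T)) -> Y > T.
Proof. intros H. apply exp_lt_inv in H. pose proof PI2_pos. nra. Qed.

Fixpoint fmin (d : nat) (f : nat -> R) : R :=
  match d with O => 1 | S d' => Rmin (fmin d' f) (f d') end.

Lemma fmin_pos d f : (forall j, (j < d)%nat -> f j > 0) -> fmin d f > 0.
Proof.
  induction d; simpl; intros H; [lra|]. apply Rmin_glb_lt; [apply IHd; intros; apply H; lia| apply H; lia].
Qed.

Lemma fmin_le d f j : (j < d)%nat -> fmin d f <= f j.
Proof.
  induction d; simpl; intros H; [lia|]. destruct (Nat.eq_dec j d).
  - subst. apply Rmin_r.
  - eapply Rle_trans; [apply Rmin_l| apply IHd; lia].
Qed.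

Lemma fmin_le1 d f : fmin d f <= 1.
Proof. induction d; simpl; [lra|]. eapply Rle_trans; [apply Rmin_l|auto]. Qed.

Lemma ker_v n d X lam Y mu : inKerPi n d X Y ->
  fsum d (fun j => Y j * (pairing n mu (X j) - lam j)) = - fsum d (fun j => Y j * lam j).
Proof.
  intros H. rewrite (fsum_lin d (fun j => Y j * pairing n mu (X j)) (fun j => Y j * lam j) _ 1 (-1))
    by (intros; ring). rewrite ker_identity by auto. ring.
Qed.

Lemma scale_Nc d z s Y j : (forall j, (j < d)%nat -> s j = Cscale (exp (- (2 * PI * Y j))) (z j)) ->
  (j < d)%nat -> Nc (s j) = exp (- (2 * PI * Y j)) * Nc (z j).
Proof. intros H Hj. rewrite H by auto. apply Nc_scale. left. apply exp_pos. Qed.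

Lemma noshrink n d X lam z w mu1 mu2 :
  inDelta n d X lam mu1 -> inDelta n d X lam mu2 ->
  (forall j, (j < d)%nat -> z j = (0,0) -> pairing n mu1 (X j) = lam j) ->
  (forall j, (j < d)%nat -> w j = (0,0) -> pairing n mu2 (X j) = lam j) ->
  adherent d (orbitA n d X z) w ->
  forall j0, (j0 < d)%nat -> Cnz (z j0) -> w j0 = (0,0) -> pairing n mu1 (X j0) = lam j0.
Proof.
  intros Hm1 Hm2 Hz Hw Hadh j0 Hj0 Hzj0 Hwj0. apply NNPP; intro Hne.
  set (v1 := fun j => pairing n mu1 (X j) - lam j).
  set (v2 := fun j => pairing n mu2 (X j) - lam j).
  assert (Hv1 : forall j, (j < d)%nat -> 0 <= v1 j) by (intros j Hj; specialize (Hm1 j Hj); unfold v1; lra).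
  assert (Hv2 : forall j, (j < d)%nat -> 0 <= v2 j) by (intros j Hj; specialize (Hm2 j Hj); unfold v2; lra).
  assert (Hv1j0 : v1 j0 > 0) by (specialize (Hm1 j0 Hj0); unfold v1; lra).
  set (Nz := fun j => Nc (z j)). set (Nw := fun j => Nc (w j)).
  set (L := fun j => if Req_dec_T (Nz j) 0 then 0 else - ln ((Nw j + 2) / Nz j) / (2 * PI)).
  set (U := fun j => if Req_dec_T (Nw j) 0 then 0 else - ln (Nw j / (2 * Nz j)) / (2 * PI)).
  set (SL := fsum d (fun j => L j * v1 j)). set (SU := fsum d (fun j => U j * v2 j)).
  set (T := L j0 + (SU - SL) / v1 j0).
  set (g := fun j => if Req_dec_T (Nw j) 0 then 1 else Nw j / 4).
  assert (HNz0 : Nz j0 > 0) by (apply Nc_pos; auto).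
  set (eps := Rmin (fmin d g) (Nz j0 * exp (- (2 * PI * T)) / 2)).
  assert (Hg : forall j, (j < d)%nat -> g j > 0).
  { intros j Hj. unfold g. destruct (Req_dec_T (Nw j) 0); [lra|]. pose proof (Nc_nonneg (w j)). fold (Nw j) in H. lra. }
  assert (Heps : eps > 0).
  { apply Rmin_glb_lt; [apply fmin_pos; auto|]. pose proof (exp_pos (- (2 * PI * T))). nra. }
  assert (Heps1 : eps <= 1) by (eapply Rle_trans; [apply Rmin_l|apply fmin_le1]).
  assert (Hepsg : forall j, (j < d)%nat -> eps <= g j) by (intros; eapply Rle_trans; [apply Rmin_l|apply fmin_le; auto]).
  assert (Hepsj0 : eps <= Nz j0 * exp (- (2 * PI * T)) / 2) by apply Rmin_r.
  destruct (Hadh eps Heps) as [s [[Y [HY Hs]] Hc]].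
  assert (HN : forall j, (j < d)%nat -> Nc (s j) = exp (- (2 * PI * Y j)) * Nz j) by (intros; eapply scale_Nc; eauto).
  assert (C1 : forall j, (j < d)%nat -> L j * v1 j <= Y j * v1 j).
  { intros j Hj. unfold L. destruct (Req_dec_T (Nz j) 0) as [e|e].
    - apply Nc_zero in e. assert (v1 j = 0) by (unfold v1; rewrite (Hz j Hj e); ring). rewrite H. lra.
    - pose proof (Nc_nonneg (z j)). fold (Nz j) in H. assert (Nz j > 0) by lra.
      destruct (close_Nc d eps s w j Hc Hj) as [h1 h2]. rewrite HN in h1, h2 by auto. fold (Nw j) in h1, h2.
      assert (exp (- (2 * PI * Y j)) < (Nw j + 2) / Nz j).
      { apply (Rmult_lt_reg_r (Nz j)); auto. replace ((Nw j + 2) / Nz j * Nz j) with (Nw j + 2) by (field; lra). lra. }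
      apply expY_lt in H1; [|pose proof (Nc_nonneg (w j)); fold (Nw j) in H2; apply Rdiv_lt_0_compat; lra].
      apply Rmult_le_compat_r; [auto|lra]. }
  assert (C2 : forall j, (j < d)%nat -> Y j * v2 j <= U j * v2 j).
  { intros j Hj. unfold U. destruct (Req_dec_T (Nw j) 0) as [e|e].
    - apply Nc_zero in e. assert (v2 j = 0) by (unfold v2; rewrite (Hw j Hj e); ring). rewrite H. lra.
    - pose proof (Nc_nonneg (w j)). fold (Nw j) in H. assert (HNw : Nw j > 0) by lra.
      assert (HNz : Nz j > 0).
      { pose proof (Nc_nonneg (z j)). fold (Nz j) in H0. destruct (Req_dec_T (Nz j) 0) as [e'|e']; [|lra].
        apply Nc_zero in e'. apply (adh_zero n d X z w j Hadh Hj) in e'. unfold Nw in e. rewrite e', Nc_00 in e. lra. }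
      destruct (close_Nc d eps s w j Hc Hj) as [h1 h2]. rewrite HN in h1, h2 by auto. fold (Nw j) in h1, h2.
      assert (Hge : eps <= Nw j / 4) by (specialize (Hepsg j Hj); unfold g in Hepsg; destruct (Req_dec_T (Nw j) 0); [lra|auto]).
      assert (Nw j / (2 * Nz j) < exp (- (2 * PI * Y j))).
      { apply (Rmult_lt_reg_r (Nz j)); auto. replace (Nw j / (2 * Nz j) * Nz j) with (Nw j / 2) by (field; lra). lra. }
      apply expY_gt in H0; [|apply Rdiv_lt_0_compat; lra].
      apply Rmult_le_compat_r; [auto|lra]. }
  assert (C3 : Y j0 > T).
  { apply expY_lt2. destruct (close_Nc d eps s w j0 Hc Hj0) as [h1 h2]. rewrite HN in h1 by auto.
    unfold Nw in h1. rewrite Hwj0, Nc_00 in h1.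
    apply (Rmult_lt_reg_r (Nz j0)); auto. lra. }
  assert (K1 : fsum d (fun j => Y j * v1 j) = - fsum d (fun j => Y j * lam j)) by exact (ker_v n d X lam Y mu1 HY).
  assert (K2 : fsum d (fun j => Y j * v2 j) = - fsum d (fun j => Y j * lam j)) by exact (ker_v n d X lam Y mu2 HY).
  assert (Hup : fsum d (fun j => Y j * v2 j) <= SU) by (apply fsum_le; auto).
  assert (Hdiff : fsum d (fun j => (Y j - L j) * v1 j) = fsum d (fun j => Y j * v1 j) - SL).
  { unfold SL. rewrite (fsum_lin d (fun j => Y j * v1 j) (fun j => L j * v1 j) _ 1 (-1)) by (intros; ring). ring. }
  assert (Hge : (Y j0 - L j0) * v1 j0 <= fsum d (fun j => (Y j - L j) * v1 j)).
  { apply (fsum_ge_term d (fun j => (Y j - L j) * v1 j)); auto. intros i Hi. specialize (C1 i Hi). lra. }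
  assert (Hgt : (Y j0 - L j0) * v1 j0 > SU - SL).
  { assert (Y j0 - L j0 > (SU - SL) / v1 j0) by (unfold T in C3; lra).
    replace (SU - SL) with ((SU - SL) / v1 j0 * v1 j0) by (field; lra).
    apply Rmult_gt_compat_r; auto. }
  lra.
Qed.

Definition app_fam {T : Type} (d : nat) (f g : nat -> T) (i : nat) : T :=
  if Nat.ltb i d then f i else g (i - d)%nat.

Lemma app_l {T} d (f g : nat -> T) i : (i < d)%nat -> app_fam d f g i = f i.
Proof. intros H. unfold app_fam. destruct (Nat.ltb_spec i d); [reflexivity|lia]. Qed.

Lemma app_r {T} d (f g : nat -> T) i : app_fam d f g (d + i) = g i.
Proof. unfold app_fam. destruct (Nat.ltb_spec (d + i) d); [lia|]. f_equal. lia. Qed.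

Definition zvec : nat -> R := fun _ => 0.

Lemma pairing_zvec n u : pairing n u zvec = 0.
Proof. unfold pairing, zvec. apply fsum_zero. intros; ring. Qed.

Lemma pairing_opp n u v : pairing n u (fun k => - v k) = - pairing n u v.
Proof. unfold pairing. rewrite (fsum_lin n (fun k => u k * v k) (fun k => u k * v k) _ (-1) 0) by (intros; ring). ring. Qed.

Lemma real_lim a N x W : N > 0 -> Rabs a <= N ->
  (forall eps, eps > 0 -> exists E, Rabs (E * a - x) < eps /\ Rabs (E * N - W) < 2 * eps) ->
  x = (W / N) * a.
Proof.
  intros HN Ha H. apply Rminus_diag_uniq. apply zero_small. intros eps He.
  destruct (H (eps / 3) ltac:(lra)) as [E [h1 h2]].
  replace (x - W / N * a) with (- (E * a - x) + (E * N - W) * (a / N)) by (field; lra).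
  eapply Rle_lt_trans; [apply Rabs_triang|]. rewrite Rabs_Ropp, Rabs_mult.
  assert (Rabs (a / N) <= 1).
  { unfold Rdiv. rewrite Rabs_mult, Rabs_inv, (Rabs_pos_eq N) by lra.
    apply (Rmult_le_reg_r N); auto. rewrite Rmult_assoc, Rinv_l by lra. lra. }
  pose proof (Rabs_pos (E * N - W)). nra.
Qed.

Lemma phase n d X z w j : adherent d (orbitA n d X z) w -> (j < d)%nat -> Cnz (w j) ->
  Nc (z j) > 0 /\ w j = Cscale (Nc (w j) / Nc (z j)) (z j).
Proof.
  intros Hadh Hj Hw.
  assert (HNz : Nc (z j) > 0).
  { pose proof (Nc_nonneg (z j)). destruct (Req_dec_T (Nc (z j)) 0) as [e|e]; [|lra].
    apply Nc_zero in e. apply (adh_zero n d X z w j Hadh Hj) in e. contradiction. }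
  split; auto.
  assert (Hx : forall eps, eps > 0 -> exists E, Rabs (E * fst (z j) - fst (w j)) < eps /\
                 Rabs (E * snd (z j) - snd (w j)) < eps /\ Rabs (E * Nc (z j) - Nc (w j)) < 2 * eps).
  { intros eps He. destruct (Hadh eps He) as [s [[Y [HY Hs]] Hc]].
    exists (exp (- (2 * PI * Y j))). destruct (Hc j Hj) as [h1 h2].
    destruct (close_Nc d eps s w j Hc Hj) as [h3 h4].
    rewrite (scale_Nc d z s Y j Hs Hj) in h3, h4.
    rewrite (Hs j Hj) in h1, h2. unfold Cscale in h1, h2; simpl in h1, h2.
    split; [|split]; auto. apply Rabs_def1; lra. }
  destruct (w j) as [w1 w2] eqn:Ew. unfold Cscale. f_equal; simpl.
  - apply real_lim; auto. apply fst_le_Nc. intros eps He. destruct (Hx eps He) as [E [h1 [h2 h3]]].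
    exists E. simpl in *. auto.
  - apply real_lim; auto. apply snd_le_Nc. intros eps He. destruct (Hx eps He) as [E [h1 [h2 h3]]].
    exists E. simpl in *. auto.
Qed.

Lemma exp_close a b : exp a > exp b / 2 -> Rabs (a - b) <= 2 * Rabs (exp a - exp b) / exp b.
Proof.
  intros H. pose proof (exp_pos a) as Pa. pose proof (exp_pos b) as Pb.
  assert (E1 : exp (a - b) * exp b = exp a) by (rewrite <- exp_plus; f_equal; ring).
  assert (E2 : exp (b - a) * exp a = exp b) by (rewrite <- exp_plus; f_equal; ring).
  pose proof (exp_ineq1_le (a - b)). pose proof (exp_ineq1_le (b - a)).
  assert (I1 : (1 + (a - b)) * exp b <= exp a) by nra.
  assert (I2 : (1 + (b - a)) * exp a <= exp b) by nra.
  apply (Rmult_le_reg_r (exp b)); auto.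
  replace (2 * Rabs (exp a - exp b) / exp b * exp b) with (2 * Rabs (exp a - exp b)) by (field; lra).
  destruct (Rle_dec b a).
  - rewrite Rabs_pos_eq by lra. rewrite Rabs_pos_eq by nra. nra.
  - rewrite Rabs_left by lra. rewrite Rabs_left1 by nra. nra.
Qed.

Lemma exp_y t : t > 0 -> exp (- (2 * PI * (- ln t / (2 * PI)))) = t.
Proof.
  intros H. pose proof PI2_pos. replace (- (2 * PI * (- ln t / (2 * PI)))) with (ln t) by (field; lra).
  apply exp_ln; auto.
Qed.

Lemma limit_rep n d X z w : adherent d (orbitA n d X z) w ->
  exists Y, inKerPi n d X Y /\
    forall j, (j < d)%nat -> Cnz (w j) -> w j = Cscale (exp (- (2 * PI * Y j))) (z j).
Proof.
  intros Hadh.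
  set (y := fun j => - ln (Nc (w j) / Nc (z j)) / (2 * PI)).
  set (A1 := fun i => if excluded_middle_informative (Cnz (w i)) then zvec else X i).
  set (A2 := fun i => if excluded_middle_informative (Cnz (w i)) then zvec else (fun k => - X i k)).
  set (a := app_fam d A1 A2).
  set (yK := fun j => if excluded_middle_informative (Cnz (w j)) then y j else 0).
  set (b := fun k => - fsum d (fun j => yK j * X j k)).
  assert (Hf : forall u, (forall i, (i < d + d)%nat -> pairing n u (a i) >= 0) -> pairing n u b >= 0).
  { intros u Hu.
    assert (Hp0 : forall j, (j < d)%nat -> ~ Cnz (w j) -> pairing n u (X j) = 0).
    { intros j Hj Hn. pose proof (Hu j ltac:(lia)) as h1. pose proof (Hu (d + j)%nat ltac:(lia)) as h2.
      unfold a in h1, h2. rewrite app_l in h1 by auto. rewrite app_r in h2. unfold A1 in h1; unfold A2 in h2.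
      destruct (excluded_middle_informative (Cnz (w j))); [contradiction|]. rewrite pairing_opp in h2. lra. }
    set (p := fun j => pairing n u (X j)).
    assert (Hb : pairing n u b = - fsum d (fun j => yK j * p j)).
    { unfold pairing at 1. transitivity (-1 * fsum n (fun k => fsum d (fun j => yK j * (u k * X j k)))).
      - rewrite <- fsum_scal. apply fsum_ext. intros k Hk. unfold b.
        rewrite (fsum_lin d (fun j => yK j * X j k) (fun j => yK j * X j k) (fun j => yK j * (u k * X j k)) (u k) 0)
          by (intros; ring). ring.
      - rewrite fsum_swap.
        rewrite (fsum_ext d _ (fun j => yK j * p j)). ring.
        intros j Hj. unfold p, pairing. rewrite <- fsum_scal. apply fsum_ext. intros; ring. }
    assert (Q0 : fsum d (fun j => yK j * p j) = 0).
    { apply zero_small. intros delta Hdel.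
      set (P := fsum d (fun j => Rabs (p j)) + 1).
      assert (HP0 : 0 <= fsum d (fun j => Rabs (p j))) by (apply fsum_nonneg; intros; apply Rabs_pos).
      assert (HP : P > 0) by (unfold P; lra).
      set (dl := delta / P).
      assert (Hdl : dl > 0) by (apply Rdiv_lt_0_compat; lra).
      pose proof PI_RGT_0 as HPI.
      set (h := fun j => if excluded_middle_informative (Cnz (w j)) then Nc (w j) * Rmin (/4) (dl * PI / 4) else 1).
      assert (Hh : forall j, (j < d)%nat -> h j > 0).
      { intros j Hj. unfold h. destruct (excluded_middle_informative (Cnz (w j))); [|lra].
        apply Rmult_lt_0_compat; [apply Nc_pos; auto|]. apply Rmin_glb_lt; [lra|]. nra. }
      set (eps := fmin d h).
      assert (Heps : eps > 0) by (apply fmin_pos; auto).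
      destruct (Hadh eps Heps) as [s [[Y [HY Hs]] Hc]].
      assert (HYy : forall j, (j < d)%nat -> Cnz (w j) -> Rabs (Y j - y j) < dl).
      { intros j Hj Hn.
        destruct (phase n d X z w j Hadh Hj Hn) as [HNz _].
        pose proof (Nc_pos _ Hn) as HNw.
        set (t := Nc (w j) / Nc (z j)).
        assert (Ht : t > 0) by (apply Rdiv_lt_0_compat; lra).
        assert (Ey : exp (- (2 * PI * y j)) = t) by (apply exp_y; auto).
        assert (Hej : eps <= h j) by (apply fmin_le; auto).
        unfold h in Hej. destruct (excluded_middle_informative (Cnz (w j))); [|contradiction].
        pose proof (Rmin_l (/4) (dl * PI / 4)). pose proof (Rmin_r (/4) (dl * PI / 4)).
        assert (He1 : eps <= Nc (w j) / 4) by nra.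
        assert (He2 : eps <= Nc (w j) * (dl * PI / 4)) by nra.
        destruct (close_Nc d eps s w j Hc Hj) as [h1 h2]. rewrite (scale_Nc d z s Y j Hs Hj) in h1, h2.
        set (E := exp (- (2 * PI * Y j))) in *.
        set (D := E * Nc (z j) - Nc (w j)).
        assert (HD : Rabs D < 2 * eps) by (unfold D; apply Rabs_def1; lra).
        assert (HEt : E > t / 2).
        { unfold t. apply (Rmult_lt_reg_r (Nc (z j))); auto.
          replace (Nc (w j) / Nc (z j) / 2 * Nc (z j)) with (Nc (w j) / 2) by (field; lra). lra. }
        pose proof (exp_close (- (2 * PI * Y j)) (- (2 * PI * y j))) as Hcl.
        fold E in Hcl. rewrite Ey in Hcl. specialize (Hcl HEt).
        assert (EtD : E - t = D / Nc (z j)) by (unfold D, t; field; lra).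
        rewrite EtD in Hcl. unfold Rdiv in Hcl. rewrite Rabs_mult, Rabs_inv, (Rabs_pos_eq (Nc (z j))) in Hcl by lra.
        assert (Hq : 2 * (Rabs D * / Nc (z j)) * / t = 2 * Rabs D / Nc (w j)) by (unfold t; field; lra).
        rewrite Hq in Hcl.
        replace (- (2 * PI * Y j) - - (2 * PI * y j)) with ((2 * PI) * (- (Y j - y j))) in Hcl by ring.
        rewrite Rabs_mult, Rabs_Ropp, (Rabs_pos_eq (2 * PI)) in Hcl by lra.
        assert (2 * Rabs D / Nc (w j) < dl * PI).
        { apply (Rmult_lt_reg_r (Nc (w j))); auto.
          replace (2 * Rabs D / Nc (w j) * Nc (w j)) with (2 * Rabs D) by (field; lra). nra. }
        nra. }
      assert (KY : fsum d (fun j => Y j * p j) = 0) by exact (ker_identity n d X Y u HY).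
      rewrite (fsum_lin d (fun j => (yK j - Y j) * p j) (fun j => Y j * p j) _ 1 1) by (intros; ring).
      rewrite KY, Rmult_0_r, Rplus_0_r, Rmult_1_l.
      eapply Rle_lt_trans; [apply fsum_abs|].
      apply Rle_lt_trans with (fsum d (fun j => dl * Rabs (p j))).
      - apply fsum_le. intros j Hj. unfold yK. destruct (excluded_middle_informative (Cnz (w j))) as [Hn|Hn].
        + rewrite Rabs_mult. apply Rmult_le_compat_r; [apply Rabs_pos|].
          rewrite Rabs_minus_sym. left. apply HYy; auto.
        + unfold p. rewrite Hp0 by auto. rewrite Rmult_0_r, Rabs_R0. lra.
      - rewrite fsum_scal. unfold dl. replace delta with (delta / P * P) at 2 by (field; lra).
        apply Rmult_lt_compat_l; [auto|unfold P; lra]. }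
    rewrite Hb, Q0. lra. }
  destruct (farkas n (d + d) a b Hf) as [c [Hc1 Hc2]].
  exists (fun j => if excluded_middle_informative (Cnz (w j)) then y j else c j - c (d + j)%nat).
  split.
  - intros k Hk.
    rewrite (fsum_lin d (fun j => yK j * X j k) (fun j => c j * a j k + c (d + j)%nat * a (d + j)%nat k) _ 1 1).
    + rewrite fsum_plus, <- (fsum_add d d (fun i => c i * a i k)), <- Hc2 by auto. unfold b. ring.
    + intros j Hj. unfold a. rewrite app_l by auto. rewrite app_r. unfold A1, A2, yK, zvec.
      destruct (excluded_middle_informative (Cnz (w j))); ring.
  - intros j Hj Hn. destruct (excluded_middle_informative (Cnz (w j))); [|contradiction].
    destruct (phase n d X z w j Hadh Hj Hn) as [HNz Hph].
    unfold y. rewrite exp_y; auto. apply Rdiv_lt_0_compat; auto. apply Nc_pos; auto.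
Qed.

Definition sub (d : nat) (I1 I2 : nat -> Prop) : Prop := forall j, (j < d)%nat -> I1 j -> I2 j.

Fixpoint cnt (d : nat) (P : nat -> Prop) : nat :=
  match d with O => O | S d' => (cnt d' P + if excluded_middle_informative (P d') then 1 else 0)%nat end.

Lemma cnt_le d P Q : sub d P Q -> (cnt d P <= cnt d Q)%nat.
Proof.
  induction d; simpl; intros H; [lia|].
  assert (cnt d P <= cnt d Q)%nat by (apply IHd; intros j Hj; apply H; lia).
  destruct (excluded_middle_informative (P d)) as [h1|h1], (excluded_middle_informative (Q d)) as [h2|h2]; try lia.
  exfalso. apply h2. apply H; auto.
Qed.

Lemma cnt_lt d P Q : sub d P Q -> (exists j, (j < d)%nat /\ Q j /\ ~ P j) -> (cnt d P < cnt d Q)%nat.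
Proof.
  induction d; simpl; intros H [j [Hj [HQ HP]]]; [lia|].
  assert (Hs : sub d P Q) by (intros i Hi; apply H; lia).
  destruct (Nat.eq_dec j d).
  - subst. pose proof (cnt_le d P Q Hs).
    destruct (excluded_middle_informative (P d)), (excluded_middle_informative (Q d)); try contradiction; lia.
  - assert (cnt d P < cnt d Q)%nat by (apply IHd; auto; exists j; split; [lia|auto]).
    destruct (excluded_middle_informative (P d)) as [h1|h1], (excluded_middle_informative (Q d)) as [h2|h2]; try lia.
    exfalso. apply h2. apply H; auto.
Qed.

Definition minimalFace n d X lam (Z G : nat -> Prop) : Prop :=
  isFaceIndex n d X lam G /\ sub d Z G /\
  forall G', isFaceIndex n d X lam G' -> sub d Z G' -> sub d G' G -> sub d G G'.

Lemma minface n d X lam (Z I0 : nat -> Prop) : isFaceIndex n d X lam I0 -> sub d Z I0 ->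
  exists G, minimalFace n d X lam Z G.
Proof.
  intros H0 H1.
  assert (Hk : forall k I, (cnt d I < k)%nat -> isFaceIndex n d X lam I -> sub d Z I ->
                 exists G, minimalFace n d X lam Z G).
  { induction k; intros I Hc HI HZ; [lia|].
    destruct (classic (forall G', isFaceIndex n d X lam G' -> sub d Z G' -> sub d G' I -> sub d I G')) as [Hm|Hm].
    - exists I. split; [|split]; auto.
    - apply not_all_ex_not in Hm. destruct Hm as [G' Hm].
      apply imply_to_and in Hm. destruct Hm as [HG' Hm].
      apply imply_to_and in Hm. destruct Hm as [HZG' Hm].
      apply imply_to_and in Hm. destruct Hm as [HsG' Hm].
      apply (IHk G'); auto.
      assert (cnt d G' < cnt d I)%nat; [|lia].
      apply cnt_lt; auto.
      apply not_all_ex_not in Hm. destruct Hm as [j Hm].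
      apply imply_to_and in Hm. destruct Hm as [Hj Hm].
      apply imply_to_and in Hm. destruct Hm as [HIj HG'j].
      exists j. auto. }
  apply (Hk (S (cnt d I0)) I0); auto.
Qed.

Definition act n X lam mu : nat -> Prop := fun j => pairing n mu (X j) = lam j.

Lemma face_of_point n d X lam mu : inDelta n d X lam mu -> isFaceIndex n d X lam (act n X lam mu).
Proof. intros H. exists mu. split; auto. intros j Hj. unfold act. tauto. Qed.

Lemma perturb n d X lam mu u : inDelta n d X lam mu ->
  (forall j, (j < d)%nat -> pairing n mu (X j) = lam j -> pairing n u (X j) >= 0) ->
  exists mu', inDelta n d X lam mu' /\
    forall j, (j < d)%nat -> (pairing n mu' (X j) = lam j <-> (pairing n mu (X j) = lam j /\ pairing n u (X j) = 0)).
Proof.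
  intros Hmu Hu.
  set (g := fun j => if Req_dec_T (pairing n mu (X j) - lam j) 0 then 1
                     else (pairing n mu (X j) - lam j) / (Rabs (pairing n u (X j)) + 1)).
  assert (Hg : forall j, (j < d)%nat -> g j > 0).
  { intros j Hj. unfold g. destruct (Req_dec_T (pairing n mu (X j) - lam j) 0); [lra|].
    specialize (Hmu j Hj). pose proof (Rabs_pos (pairing n u (X j))). apply Rdiv_lt_0_compat; lra. }
  set (dl := fmin d g). assert (Hdl : dl > 0) by (apply fmin_pos; auto).
  exists (fun k => 1 * mu k + dl * u k).
  assert (E : forall j, pairing n (fun k => 1 * mu k + dl * u k) (X j) = pairing n mu (X j) + dl * pairing n u (X j))
    by (intros; rewrite pairing_lin1; ring).
  assert (Hmain : forall j, (j < d)%nat ->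
    (pairing n mu (X j) - lam j = 0 /\ pairing n u (X j) >= 0) \/
    (pairing n mu (X j) + dl * pairing n u (X j) - lam j > 0 /\ pairing n mu (X j) - lam j > 0)).
  { intros j Hj. specialize (Hmu j Hj). destruct (Req_dec_T (pairing n mu (X j) - lam j) 0) as [e|e].
    - left. split; auto. apply Hu; auto. lra.
    - right. assert (Hgap : pairing n mu (X j) - lam j > 0) by lra. split; auto.
      assert (Hle : dl <= g j) by (apply fmin_le; auto). unfold g in Hle.
      destruct (Req_dec_T (pairing n mu (X j) - lam j) 0); [contradiction|].
      set (p := pairing n u (X j)) in *. set (v := pairing n mu (X j) - lam j) in *.
      pose proof (Rabs_pos p).
      assert (dl * (Rabs p + 1) <= v).
      { apply (Rmult_le_compat_r (Rabs p + 1)) in Hle; [|lra].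
        replace (v / (Rabs p + 1) * (Rabs p + 1)) with v in Hle by (field; lra). auto. }
      assert (- (dl * Rabs p) <= dl * p).
      { destruct (Rle_dec 0 p). rewrite Rabs_pos_eq by auto. nra. rewrite Rabs_left by lra. nra. }
      unfold v in *. nra. }
  split.
  - intros j Hj. rewrite E. destruct (Hmain j Hj) as [[h1 h2]|[h1 h2]]; nra.
  - intros j Hj. rewrite E. destruct (Hmain j Hj) as [[h1 h2]|[h1 h2]]; split.
    + intros h. split; [lra|].
      assert (dl * pairing n u (X j) = 0) by lra. apply Rmult_integral in H. destruct H; [lra|auto].
    + intros [h3 h4]. rewrite h4. lra.
    + intros h. lra.
    + intros [h3 h4]. lra.
Qed.


Lemma Yj0 n d X lam (Z G : nat -> Prop) muG j0 :
  activeSet n d X lam G muG -> minimalFace n d X lam Z G -> (j0 < d)%nat -> G j0 -> ~ Z j0 ->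
  exists Y, inKerPi n d X Y /\ (forall j, (j < d)%nat -> ~ G j -> Y j = 0) /\
            (forall j, (j < d)%nat -> G j -> ~ Z j -> Y j >= 0) /\ Y j0 > 0.
Proof.
  intros [HmuG HaG] [HGf [HZG Hmin]] Hj0 HGj0 HZj0.
  set (B1 := fun i => if excluded_middle_informative (Z i) then X i else zvec).
  set (B2 := fun i => if excluded_middle_informative (Z i) then (fun k => - X i k) else zvec).
  set (B3 := fun i => if excluded_middle_informative (G i /\ ~ Z i) then X i else zvec).
  set (a := app_fam d B1 (app_fam d B2 B3)).
  set (b := fun k => - X j0 k).
  assert (Ha1 : forall j, (j < d)%nat -> a j = B1 j) by (intros; unfold a; rewrite app_l; auto).
  assert (Ha2 : forall j, (j < d)%nat -> a (d + j)%nat = B2 j) by (intros; unfold a; rewrite app_r, app_l; auto).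
  assert (Ha3 : forall j, a (d + (d + j))%nat = B3 j) by (intros; unfold a; rewrite !app_r; auto).
  assert (Hf : forall u, (forall i, (i < d + (d + d))%nat -> pairing n u (a i) >= 0) -> pairing n u b >= 0).
  { intros u Hu. unfold b. rewrite pairing_opp.
    destruct (Rle_dec (pairing n u (X j0)) 0) as [|Hpos]; [lra|exfalso].
    assert (HZu : forall j, (j < d)%nat -> Z j -> pairing n u (X j) = 0).
    { intros j Hj HZ. pose proof (Hu j ltac:(lia)) as h1. pose proof (Hu (d + j)%nat ltac:(lia)) as h2.
      rewrite Ha1 in h1 by auto. rewrite Ha2 in h2 by auto. unfold B1 in h1; unfold B2 in h2.
      destruct (excluded_middle_informative (Z j)); [|contradiction]. rewrite pairing_opp in h2. lra. }
    assert (HGu : forall j, (j < d)%nat -> G j -> ~ Z j -> pairing n u (X j) >= 0).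
    { intros j Hj HG HZ. pose proof (Hu (d + (d + j))%nat ltac:(lia)) as h3.
      rewrite Ha3 in h3. unfold B3 in h3.
      destruct (excluded_middle_informative (G j /\ ~ Z j)); [auto|tauto]. }
    destruct (perturb n d X lam muG u HmuG) as [mu' [Hmu' Hact]].
    { intros j Hj Hp. apply HaG in Hp; auto. destruct (classic (Z j)).
      - rewrite HZu by auto. lra.
      - apply HGu; auto. }
    assert (Hsub : sub d G (act n X lam mu')).
    { apply Hmin.
      - apply face_of_point; auto.
      - intros j Hj HZ. unfold act. apply Hact; auto. split; [apply HaG; auto|apply HZu; auto].
      - intros j Hj Ha. unfold act in Ha. apply Hact in Ha; auto. apply HaG; tauto. }
    specialize (Hsub j0 Hj0 HGj0). unfold act in Hsub. apply Hact in Hsub; auto. lra. }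
  destruct (farkas n (d + (d + d)) a b Hf) as [c [Hc1 Hc2]].
  exists (fun j => (if excluded_middle_informative (Z j) then c j - c (d + j)%nat else 0)
            + (if excluded_middle_informative (G j /\ ~ Z j) then c (d + (d + j))%nat else 0)
            + (if Nat.eq_dec j j0 then 1 else 0)).
  split; [|split; [|split]].
  - intros k Hk.
    rewrite (fsum_lin d (fun j => c j * a j k + c (d + j)%nat * a (d + j)%nat k + c (d + (d + j))%nat * a (d + (d + j))%nat k)
               (fun j => (if Nat.eq_dec j j0 then 1 else 0) * X j k) _ 1 1).
    + rewrite fsum_single by auto.
      rewrite !fsum_plus.
      assert (Hsplit : fsum (d + (d + d)) (fun i => c i * a i k) =
         fsum d (fun j => c j * a j k) + fsum d (fun j => c (d + j)%nat * a (d + j)%nat k)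
           + fsum d (fun j => c (d + (d + j))%nat * a (d + (d + j))%nat k)).
      { rewrite fsum_add. simpl. rewrite (fsum_add d d). ring. }
      rewrite <- Hsplit, <- Hc2 by auto. unfold b. ring.
    + intros j Hj. rewrite Ha1, Ha2 by auto. rewrite Ha3. unfold B1, B2, B3, zvec.
      destruct (excluded_middle_informative (Z j)), (excluded_middle_informative (G j /\ ~ Z j)); ring.
  - intros j Hj HG. destruct (excluded_middle_informative (Z j)) as [h|h]; [exfalso; apply HG, HZG; auto|].
    destruct (excluded_middle_informative (G j /\ ~ Z j)) as [h'|h']; [tauto|].
    destruct (Nat.eq_dec j j0); [subst; contradiction|]. ring.
  - intros j Hj HG HZ. destruct (excluded_middle_informative (Z j)) as [h|h]; [contradiction|].
    destruct (excluded_middle_informative (G j /\ ~ Z j)) as [h'|h']; [|tauto].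
    specialize (Hc1 (d + (d + j))%nat ltac:(lia)). destruct (Nat.eq_dec j j0); lra.
  - destruct (excluded_middle_informative (Z j0)) as [h|h]; [contradiction|].
    destruct (excluded_middle_informative (G j0 /\ ~ Z j0)) as [h'|h']; [|tauto].
    specialize (Hc1 (d + (d + j0))%nat ltac:(lia)). destruct (Nat.eq_dec j0 j0); [|congruence]. lra.
Qed.

Lemma Yall n d X lam (Z G : nat -> Prop) muG :
  activeSet n d X lam G muG -> minimalFace n d X lam Z G ->
  exists Y, inKerPi n d X Y /\ (forall j, (j < d)%nat -> ~ G j -> Y j = 0) /\
            (forall j, (j < d)%nat -> G j -> ~ Z j -> Y j > 0).
Proof.
  intros HA HM.
  assert (Hm : forall m, exists Y, inKerPi n d X Y /\ (forall j, (j < d)%nat -> ~ G j -> Y j = 0) /\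
            (forall j, (j < d)%nat -> G j -> ~ Z j -> Y j >= 0) /\
            (forall j, (j < m)%nat -> (j < d)%nat -> G j -> ~ Z j -> Y j > 0)).
  { induction m.
    - exists (fun _ => 0). split; [apply ker_zero|]. split; [auto|]. split; [intros; lra|]. intros; lia.
    - destruct IHm as [Y [HY1 [HY2 [HY3 HY4]]]].
      destruct (classic ((m < d)%nat /\ G m /\ ~ Z m)) as [[Hmd [HGm HZm]]|Hc].
      + destruct (Yj0 n d X lam Z G muG m HA HM Hmd HGm HZm) as [Y' [H1 [H2 [H3 H4]]]].
        exists (fun j => 1 * Y j + 1 * Y' j). split; [apply ker_lin; auto|].
        split; [intros; rewrite HY2, H2 by auto; ring|].
        split; [intros j Hj HG HZ; specialize (HY3 j Hj HG HZ); specialize (H3 j Hj HG HZ); lra|].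
        intros j Hj Hjd HG HZ. destruct (Nat.eq_dec j m).
        * subst. specialize (HY3 m Hjd HG HZ). lra.
        * specialize (HY4 j ltac:(lia) Hjd HG HZ). specialize (H3 j Hjd HG HZ). lra.
      + exists Y. split; auto. split; auto. split; auto.
        intros j Hj Hjd HG HZ. destruct (Nat.eq_dec j m).
        * subst. exfalso. apply Hc. auto.
        * apply HY4; auto; lia. }
  destruct (Hm d) as [Y [H1 [H2 [H3 H4]]]]. exists Y. split; [auto|split; [auto|]]. intros; apply H4; auto.
Qed.

Lemma expY_lt_rev Y a : 0 < a -> Y > - ln a / (2 * PI) -> exp (- (2 * PI * Y)) < a.
Proof.
  intros Ha H. rewrite <- (exp_ln a Ha). apply exp_increasing. pose proof PI2_pos.
  apply (Rmult_lt_compat_r (2 * PI)) in H; auto.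
  replace (- ln a / (2 * PI) * (2 * PI)) with (- ln a) in H by (field; lra). lra.
Qed.

Definition wG (G : nat -> Prop) (z : Cpoint) : Cpoint :=
  fun j => if excluded_middle_informative (G j) then (0,0) else z j.

Lemma closure_w n d X lam z (G : nat -> Prop) Y :
  isFaceIndex n d X lam G ->
  (forall j, (j < d)%nat -> z j = (0,0) -> G j) ->
  inKerPi n d X Y -> (forall j, (j < d)%nat -> ~ G j -> Y j = 0) ->
  (forall j, (j < d)%nat -> G j -> z j <> (0,0) -> Y j > 0) ->
  forall v, orbitA n d X (wG G z) v -> closureIn d (inCdDelta n d X lam) (orbitA n d X z) v.
Proof.
  intros HG HZG HY HY0 HYp v [Y' [HY' Hv]].
  split.
  - exists G. split; auto. intros j Hj HnG. rewrite Hv by auto. unfold wG.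
    destruct (excluded_middle_informative (G j)); [contradiction|].
    apply Cnz_of_Nc. rewrite Nc_scale by (left; apply exp_pos).
    assert (Cnz (z j)) by (intro e; apply HnG; apply HZG; auto).
    apply Rmult_lt_0_compat; [apply exp_pos|apply Nc_pos; auto].
  - intros eps Heps.
    set (R0 := fun j => - ln (eps / Nc (z j)) / (2 * PI) - Y' j).
    set (t := fsum d (fun j => if excluded_middle_informative (G j /\ z j <> (0,0)) then (Rabs (R0 j) + 1) / Y j else 0)).
    exists (fun j => Cscale (exp (- (2 * PI * (1 * Y' j + t * Y j)))) (z j)). split.
    + exists (fun j => 1 * Y' j + t * Y j). split; [apply ker_lin; auto|]. auto.
    + intros j Hj. rewrite Hv by auto. unfold wG. destruct (excluded_middle_informative (G j)) as [HGj|HGj].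
      * rewrite Cscale_0. destruct (classic (z j = (0,0))) as [Hz|Hz].
        -- rewrite Hz, Cscale_0. simpl. rewrite Rminus_0_r, Rabs_R0. lra.
        -- assert (HNz : Nc (z j) > 0) by (apply Nc_pos; auto).
           assert (HYj : Y j > 0) by (apply HYp; auto).
           assert (Ht : (Rabs (R0 j) + 1) / Y j <= t).
           { unfold t. apply (fsum_ge_term d (fun j => if excluded_middle_informative (G j /\ z j <> (0,0)) then (Rabs (R0 j) + 1) / Y j else 0) j) in Hj.
             - destruct (excluded_middle_informative (G j /\ z j <> (0,0))); [auto|tauto].
             - intros i Hi. destruct (excluded_middle_informative (G i /\ z i <> (0,0))) as [[h1 h2]|]; [|lra].
               pose proof (HYp i Hi h1 h2). pose proof (Rabs_pos (R0 i)). left. apply Rdiv_lt_0_compat; lra. }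
           assert (HtY : t * Y j >= Rabs (R0 j) + 1).
           { apply (Rmult_le_compat_r (Y j)) in Ht; [|lra].
             replace ((Rabs (R0 j) + 1) / Y j * Y j) with (Rabs (R0 j) + 1) in Ht by (field; lra). lra. }
           assert (Hlt : exp (- (2 * PI * (1 * Y' j + t * Y j))) < eps / Nc (z j)).
           { apply expY_lt_rev; [apply Rdiv_lt_0_compat; lra|].
             pose proof (Rle_abs (R0 j)). unfold R0 in *. lra. }
           assert (HN : Nc (Cscale (exp (- (2 * PI * (1 * Y' j + t * Y j)))) (z j)) < eps).
           { rewrite Nc_scale by (left; apply exp_pos).
             apply (Rmult_lt_compat_r (Nc (z j))) in Hlt; auto.
             replace (eps / Nc (z j) * Nc (z j)) with eps in Hlt by (field; lra). lra. }
           pose proof (fst_le_Nc (Cscale (exp (- (2 * PI * (1 * Y' j + t * Y j)))) (z j))) as h1.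
           pose proof (snd_le_Nc (Cscale (exp (- (2 * PI * (1 * Y' j + t * Y j)))) (z j))) as h2.
           set (cc := Cscale (exp (- (2 * PI * (1 * Y' j + t * Y j)))) (z j)) in *.
           simpl. rewrite !Rminus_0_r. split; [change (Rabs (fst cc) < eps)|change (Rabs (snd cc) < eps)]; lra.
      * rewrite HY0 by auto. replace (1 * Y' j + t * 0) with (Y' j) by ring.
        rewrite !Rminus_diag_eq by auto. rewrite Rabs_R0. lra.
Qed.

Lemma dir2 n d X lam z mu : inDelta n d X lam mu ->
  (forall j, (j < d)%nat -> (z j = (0,0) <-> pairing n mu (X j) = lam j)) ->
  closedIn d (inCdDelta n d X lam) (orbitA n d X z).
Proof.
  intros Hmu Hz w [I [[mu2 [Hmu2 Ha2]] Hw]] Hadh.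
  assert (HNS := noshrink n d X lam z w mu mu2 Hmu Hmu2
     ltac:(intros j Hj e; apply Hz; auto)
     ltac:(intros j Hj e; apply Ha2; auto; apply NNPP; intro HnI; exact (Hw j Hj HnI e)) Hadh).
  destruct (limit_rep n d X z w Hadh) as [Y [HY HYw]].
  exists Y. split; auto. intros j Hj.
  destruct (classic (Cnz (w j))) as [Hn|Hn]; [apply HYw; auto|].
  assert (Hw0 : w j = (0,0)) by (apply NNPP; exact Hn).
  assert (Hz0 : z j = (0,0)).
  { apply NNPP. intro Hc. apply Hc. apply (proj2 (Hz j Hj)). apply HNS; auto. }
  rewrite Hw0, Hz0, Cscale_0. reflexivity.
Qed.

Lemma setupG n d X lam z : inCdDelta n d X lam z ->
  exists G muG Y, activeSet n d X lam G muG /\ minimalFace n d X lam (fun j => z j = (0,0)) G /\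
    inKerPi n d X Y /\ (forall j, (j < d)%nat -> ~ G j -> Y j = 0) /\
    (forall j, (j < d)%nat -> G j -> z j <> (0,0) -> Y j > 0).
Proof.
  intros [I0 [HI0 HI0z]].
  assert (Hs : sub d (fun j => z j = (0,0)) I0).
  { intros j Hj e. apply NNPP. intro h. exact (HI0z j Hj h e). }
  destruct (minface n d X lam _ I0 HI0 Hs) as [G HM].
  destruct HM as [[muG HA] HMr]. 
  destruct (Yall n d X lam (fun j => z j = (0,0)) G muG HA (conj (ex_intro _ muG HA) HMr)) as [Y [H1 [H2 H3]]].
  exists G, muG, Y. split; auto. split; [exact (conj (ex_intro _ muG HA) HMr)|]. auto.
Qed.

Lemma dir1 n d X lam z : inCdDelta n d X lam z ->
  closedIn d (inCdDelta n d X lam) (orbitA n d X z) ->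
  exists I, isFaceIndex n d X lam I /\ inCstarFc d I z.
Proof.
  intros hz Hcl.
  destruct (setupG n d X lam z hz) as [G [muG [Y [HA [[HGf [HZG Hmin]] [HY [HY0 HYp]]]]]]].
  destruct (classic (forall j, (j < d)%nat -> G j -> z j = (0,0))) as [Hall|Hex].
  - exists G. split; auto. intros j Hj. split; auto. intros HnG Hzj. apply HnG, HZG; auto.
  - exfalso. apply not_all_ex_not in Hex. destruct Hex as [j0 Hex].
    apply imply_to_and in Hex. destruct Hex as [Hj0 Hex]. apply imply_to_and in Hex. destruct Hex as [HG0 Hz0].
    destruct (closure_w n d X lam z G Y HGf HZG HY HY0 HYp (wG G z) (orbit_refl n d X (wG G z))) as [HU Had].
    destruct (Hcl (wG G z) HU Had) as [Y2 [_ HY2]].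
    specialize (HY2 j0 Hj0). unfold wG at 1 in HY2.
    destruct (excluded_middle_informative (G j0)); [|contradiction].
    apply (f_equal Nc) in HY2. rewrite Nc_00, Nc_scale in HY2 by (left; apply exp_pos).
    pose proof (exp_pos (- (2 * PI * Y2 j0))). pose proof (Nc_pos (z j0) Hz0). nra.
Qed.

Theorem mainTheorem3 (n d : nat) (X : nat -> nat -> R) (lam : nat -> R)
  (hDelta : isPolytopeData n d X lam)
  (z : Cpoint) (hz : inCdDelta n d X lam z) :
  (closedIn d (inCdDelta n d X lam) (orbitA n d X z) <->
     exists I, isFaceIndex n d X lam I /\ inCstarFc d I z) /\
  (~ closedIn d (inCdDelta n d X lam) (orbitA n d X z) ->
     exists w,
       inCdDelta n d X lam w /\
       (forall v, orbitA n d X w v -> closureIn d (inCdDelta n d X lam) (orbitA n d X z) v) /\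
       closedIn d (inCdDelta n d X lam) (orbitA n d X w) /\
       (forall w', inCdDelta n d X lam w' ->
          (forall v, orbitA n d X w' v -> closureIn d (inCdDelta n d X lam) (orbitA n d X z) v) ->
          closedIn d (inCdDelta n d X lam) (orbitA n d X w') ->
          orbitA n d X w w')).
Proof.
  split.
  - split; [apply dir1; auto|].
    intros [I [[mu [Hmu Ha]] HI]]. apply (dir2 n d X lam z mu Hmu).
    intros j Hj. rewrite (Ha j Hj). split.
    + intros e. apply NNPP. intro h. exact (proj2 (HI j Hj) h e).
    + apply (HI j Hj).
  - intros _.
    destruct (setupG n d X lam z hz) as [G [muG [Y [[HmuG HaG] [[HGf [HZG Hmin]] [HY [HY0 HYp]]]]]]].
    exists (wG G z). split; [|split; [|split]].
    + exists G. split; auto. intros j Hj HnG. unfold wG.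
      destruct (excluded_middle_informative (G j)); [contradiction|].
      intro e. apply HnG, HZG; auto.
    + apply (closure_w n d X lam z G Y); auto.
    + apply (dir2 n d X lam (wG G z) muG HmuG). intros j Hj. rewrite (HaG j Hj). unfold wG.
      destruct (excluded_middle_informative (G j)) as [h|h]; split; auto; try tauto.
      all: intros e; exfalso; apply h, HZG; auto.
    + intros w' Hw' Hcl' Hclosed'.
      destruct (dir1 n d X lam w' Hw' Hclosed') as [I' [[mu' [Hmu' Ha']] HI']].
      destruct (Hcl' w' (orbit_refl n d X w')) as [_ Hadh].
      assert (Hw'0 : forall j, (j < d)%nat -> w' j = (0,0) -> I' j).
      { intros j Hj e. apply NNPP. intro h. exact (proj2 (HI' j Hj) h e). }
      assert (HNS := noshrink n d X lam z w' muG mu' HmuG Hmu'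
         ltac:(intros j Hj e; apply HaG; auto)
         ltac:(intros j Hj e; apply Ha'; auto) Hadh).
      assert (HsubI'G : sub d I' G).
      { intros j Hj HI. pose proof (proj1 (HI' j Hj) HI) as e.
        destruct (classic (z j = (0,0))) as [ez|ez]; [apply HZG; auto|].
        apply (proj1 (HaG j Hj)). apply HNS; auto. }
      assert (HsubZI' : sub d (fun j => z j = (0,0)) I').
      { intros j Hj e. apply Hw'0; auto. apply (adh_zero n d X z w' j Hadh Hj e). }
      assert (HsubGI' := Hmin I' (ex_intro _ mu' (conj Hmu' Ha')) HsubZI' HsubI'G).
      destruct (limit_rep n d X z w' Hadh) as [Y' [HY' HYw']].
      exists Y'. split; auto. intros j Hj. unfold wG.
      destruct (excluded_middle_informative (G j)) as [h|h].
      * rewrite Cscale_0. apply (proj1 (HI' j Hj)). apply HsubGI'; auto.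
      * apply HYw'; auto. apply (proj2 (HI' j Hj)). intro hI. apply h, HsubI'G; auto.
Qed.
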